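(* Assume the setting of the context, with $\Delta x\sim h$. Then for all $\Delta=(h,\Delta x)$ sufficiently small, the solution $V^\Delta=(V^\Delta_{i,j})$ of the scheme, i.e. the bounded solution of $\mathcal{F}^\Delta_j(x_i,(V^\Delta_{i,j},V^\Delta_{i,\bar\jmath}),V^\Delta_{\cdot,j})=0$ for all $i\in\mathbb{N}$, $j=1,2$, is nondecreasing in $i$ for each $j$.
   Context: Constants: $\rho>0$, $r<\rho$, $0<y_1<y_2$, $\gamma>1$, $\underline{x}\le0$ with $\rho\underline{x}+y_j>0$, $\lambda_1,\lambda_2\ge0$; $\bar\jmath=3-j$; $u(c)=\frac{c^{1-\gamma}}{1-\gamma}$ for $c>0$, $u(0)=-\infty$. Discretization $\Delta=(h,\Delta x)$, $h,\Delta x>0$, $\rho h<1$, $\lambda_jh<1$; ''$\Delta x\sim h$'' means $h/\Delta x$ stays between two fixed positive constants as $\Delta\to0$. Grid $x_i=\underline{x}+i\Delta x$, $i\in\mathbb{N}=\{0,1,\dots\}$. $\beta_k(x)=\max\{0,1-|x-x_k|/\Delta x\}$ for $x\ge\underline{x}$. $\mathcal{C}^\Delta_j(x_i)=\{c\ge0:x_i+h(rx_i+y_j-c)\ge\underline{x}\}$, $s_{i,j}(c)=rx_i+y_j-c$. Scheme: $$\mathcal{F}^\Delta_j(x_i,(\mathsf{q}_j,\mathsf{q}_{\bar\jmath}),\mathsf{U})=\rho\mathsf{q}_j-(1-\rho h)\lambda_j(\mathsf{q}_{\bar\jmath}-\mathsf{q}_j)-\sup_{c\in\mathcal{C}^\Delta_j(x_i)}\Big\{u(c)+\frac{(1-\rho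 h)(1-\lambda_jh)}{h}\Big(\sum_k\beta_k(x_i+hs_{i,j}(c))\mathsf{U}_k-\mathsf{q}_j\Big)\Big\}.$$ This scheme has a unique bounded solution. *)

(* Defs.v *)
From HB Require Import structures.
From mathcomp Require Import all_boot all_order all_algebra.
From mathcomp Require Import all_classical all_reals.
From mathcomp Require Import ereal topology normedtype sequences exp.
Set Implicit Arguments. Unset Strict Implicit. Unset Printing Implicit Defensive.
Import Order.TTheory GRing.Theory Num.Theory numFieldNormedType.Exports.
Local Open Scope classical_set_scope.
Local Open Scope ring_scope.

(* Regimes j = 1,2 are encoded by j : 'I_2 (ord 0 <-> j=1, ord 1 <-> j=2). *)
Definition jbar (j : 'I_2) : 'I_2 := rev_ord j.

Definition util {R : realType} (gamma c : R) : \bar R :=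
  if 0 < c then (powR c (1 - gamma) / (1 - gamma))%:E else -oo%E.

Definition grid {R : realType} (xl dx : R) (i : nat) : R := xl + i%:R * dx.

Definition beta {R : realType} (xl dx : R) (k : nat) (x : R) : R :=
  Num.max 0 (1 - `|x - grid xl dx k| / dx).

Definition interp {R : realType} (xl dx : R) (U : nat -> R) (x : R) : R :=
  limn (fun n => \sum_(0 <= k < n) beta xl dx k x * U k).

Definition Cadm {R : realType} (r xl h dx yj : R) (i : nat) : set R :=
  [set c | 0 <= c /\ xl <= grid xl dx i + h * (r * grid xl dx i + yj - c)].

(* The scheme F^Delta_j(x_i, (q_j, q_jbar), U), an extended real
   (the supremum may be -oo). *)
Definition Fscheme {R : realType} (rho r gamma xl : R) (y lam : 'I_2 -> R)
    (h dx : R) (j : 'I_2) (i : nat) (qj qjb : R) (U : nat -> R) : \bar R :=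
  let xi := grid xl dx i in
  ((rho * qj - (1 - rho * h) * lam j * (qjb - qj))%:E -
   ereal_sup [set (util gamma c +
       ((1 - rho * h) * (1 - lam j * h) / h *
          (interp xl dx U (xi + h * (r * xi + y j - c)) - qj))%:E)%E
     | c in Cadm r xl h dx (y j) i])%E.

(* Main.v *)
Require Import Defs.
From HB Require Import structures.
From mathcomp Require Import all_boot all_order all_algebra.
From mathcomp Require Import all_classical all_reals.
From mathcomp Require Import ereal topology normedtype sequences exp.
From mathcomp Require Import ring lra zify.
Import Order.TTheory GRing.Theory Num.Theory numFieldNormedType.Exports.
Local Open Scope classical_set_scope.
Local Open Scope ring_scope.

Section S.
Variable R : realType.

Lemma natS' (k : nat) : (k.+1)%:R = k%:R + 1 :> R.
Proof. by rewrite -addn1 natrD. Qed.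


Lemma beta_val (xl dx t : R) (k m : nat) : 0 < dx -> 0 <= t < 1 ->
  beta xl dx m (xl + (k%:R + t) * dx) =
  if m == k then 1 - t else if m == k.+1 then t else 0.
Proof.
move=> dx0 /andP[t0 t1]; rewrite /beta /grid.
have -> : xl + (k%:R + t) * dx - (xl + m%:R * dx) = (k%:R + t - m%:R) * dx by ring.
rewrite normrM (gtr0_norm dx0) mulfK; last by rewrite gt_eqF.
case: (boolP (m == k)) => [/eqP->|hk].
  rewrite addrAC subrr add0r ger0_norm //.
  apply/max_idPr; lra.
case: (boolP (m == k.+1)) => [/eqP->|hk1].
  rewrite natS' ler0_norm; last lra.
  have -> : 1 - - (k%:R + t - (k%:R + 1)) = t by ring.
  by apply/max_idPr.
apply/max_idPl.
have [lt|gt] := ltnP m k.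
  have : (m.+1 <= k)%N by [].
  rewrite -(ler_nat R) => h. rewrite natS' in h.
  rewrite ger0_norm; lra.
have : (k.+2 <= m)%N.
  by rewrite ltn_neqAle eq_sym hk1 /= ltn_neqAle eq_sym hk.
rewrite -(ler_nat R) => h. rewrite -addn2 natrD in h.
rewrite ler0_norm; lra.
Qed.

Lemma psum_eq (xl dx t : R) (U : nat -> R) (k n : nat) : 0 < dx -> 0 <= t < 1 ->
  (k.+2 <= n)%N ->
  \sum_(0 <= m < n) beta xl dx m (xl + (k%:R + t) * dx) * U m =
  (1 - t) * U k + t * U k.+1.
Proof.
move=> dx0 ht /subnK <-; elim: (n - k.+2)%N => [|p IH].
  rewrite add0n !big_nat_recr //= !beta_val // eqxx.
  rewrite (gtn_eqF (ltnSn k)) eqxx.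
  rewrite big_nat_cond big1; first by rewrite add0r.
  move=> m /andP[/andP[_ hm] _]; rewrite beta_val //.
  rewrite (ltn_eqF hm) (ltn_eqF (leq_trans hm (leqnSn _))).
  by rewrite mul0r.
rewrite addSn big_nat_recr //= IH beta_val //.
have h1 : (p + k.+2 == k)%N = false by apply/negbTE/eqP; lia.
have h2 : (p + k.+2 == k.+1)%N = false by apply/negbTE/eqP; lia.
by rewrite h1 h2 mul0r addr0.
Qed.

Lemma interp_eq (xl dx t : R) (U : nat -> R) (k : nat) : 0 < dx -> 0 <= t < 1 ->
  interp xl dx U (xl + (k%:R + t) * dx) = U k + t * (U k.+1 - U k).
Proof.
move=> dx0 ht; rewrite /interp.
have -> : U k + t * (U k.+1 - U k) = (1 - t) * U k + t * U k.+1 by ring.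
have H : \forall n \near \oo, \sum_(0 <= m < n) beta xl dx m (xl + (k%:R + t) * dx) * U m = (1 - t) * U k + t * U k.+1.
  by exists k.+2 => // n /= hn; rewrite psum_eq.
exact: lim_near_cst H.
Qed.

Lemma W_mono (W : nat -> R) : (forall k, W k <= W k.+1) ->
  forall m n, (m <= n)%N -> W m <= W n.
Proof.
move=> hW m n /subnKC <-; elim: (n - m)%N => [|p IH]; first by rewrite addn0.
by rewrite addnS; apply: le_trans IH (hW _).
Qed.

Lemma interp_mono (xl dx D : R) (U : nat -> R) (y1 y2 : R) : 0 < dx ->
  (forall k, D <= U k.+1 - U k) -> 0 <= y1 -> y1 <= y2 ->
  D * (y2 - y1) <= interp xl dx U (xl + y2 * dx) - interp xl dx U (xl + y1 * dx).
Proof.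
move=> dx0 hD y10 y12.
have y20 : 0 <= y2 by apply: le_trans y12.
have /andP[a1 b1] := truncn_itv y10.
have /andP[a2 b2] := truncn_itv y20.
set k1 := Num.truncn y1 in a1 b1 *; set k2 := Num.truncn y2 in a2 b2 *.
rewrite -[in X in interp _ _ _ (_ + X * _)](subrKC k2%:R y2) addrC.
rewrite -[in X in _ - interp _ _ _ (_ + X * _)](subrKC k1%:R y1) addrC.
rewrite !interp_eq //; last 2 first.
- by apply/andP; split; rewrite natS' in b1 *; lra.
- by apply/andP; split; rewrite natS' in b2 *; lra.
pose W k := U k - D * k%:R.
have hW : forall k, W k <= W k.+1.
  by move=> k; rewrite /W natS'; have := hD k; lra.
have E : forall k t, U k + t * (U k.+1 - U k) = W k + t * (W k.+1 - W k) + D * (k%:R + t).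
  by move=> k t; rewrite /W natS'; ring.
rewrite !E.
have [lt|ge] := ltnP k1 k2.
- have h1 := @W_mono W hW _ _ lt.
  have h2 := hW k1.
  have h3 := hW k2.
  have t1 : y1 - k1%:R <= 1 by rewrite natS' in b1; lra.
  have t2 : 0 <= y2 - k2%:R by lra.
  nra.
- have ek : k1 = k2.
    apply/eqP; rewrite eqn_leq ge andbT.
    case: (ltnP k2 k1) => // h.
    have : (k2.+1 <= k1)%N := h.
    rewrite -(ler_nat R) natS' => h'.
    lra.
  rewrite ek.
  have h3 := hW k2.
  nra.
Qed.

Lemma supE (A : R) (S : \bar R) : (A%:E - S = 0)%E -> S = A%:E.
Proof.
case: S => [s| |] //=.
by move=> /eqP; rewrite -EFinB eqe subr_eq0 => /eqP ->.
Qed.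
End S.
Theorem mainTheorem15 (R : realType) (rho r gamma xl : R) (y lam : 'I_2 -> R) :
  0 < rho -> r < rho -> 0 < y ord0 -> y ord0 < y ord_max -> 1 < gamma ->
  xl <= 0 -> (forall j, 0 < rho * xl + y j) -> (forall j, 0 <= lam j) ->
  forall c1 c2 : R, 0 < c1 -> c1 <= c2 ->
  exists delta : R, 0 < delta /\
    forall h dx : R, 0 < h -> h < delta -> 0 < dx -> dx < delta ->
      c1 <= h / dx <= c2 ->
      rho * h < 1 -> (forall j, lam j * h < 1) ->
      forall V : nat -> 'I_2 -> R,
        (exists M : R, forall i j, `|V i j| <= M) ->
        (forall i j, Fscheme rho r gamma xl y lam h dx j i
                       (V i j) (V i (jbar j)) (fun k => V k j) = 0%E) ->
        forall j i, V i j <= V i.+1 j.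
Proof.
move=> rho0 rrho _ _ _ _ _ lam0 c1 c2 _ _.
have r1 : 0 < `|r| + 1 by rewrite ltr_wpDl.
exists (1 / (`|r| + 1)); split; first by rewrite divr_gt0.
move=> h dx h0 hd dx0 _ _ rhoh lamh V [M hM] HF.
have rh : 0 < 1 + r * h.
  move: hd; rewrite ltr_pdivlMr // => hd.
  have := ler_norm (- r); rewrite normrN => hr.
  nra.
pose d i j := V i.+1 j - V i j.
pose DS := [set x | exists i j, x = d i j].
have DSlb : has_lbound DS.
  exists (- (M + M)) => x [i [j ->]].
  have := hM i j; have := hM i.+1 j; rewrite !ler_norml /d.
  move=> /andP[? ?] /andP[? ?]; lra.
pose D := inf DS.
have hD : forall i j, D <= d i j by move=> i j; apply: ge_inf => //; exists i, j.
pose K j := (1 - rho * h) * (1 - lam j * h) / h.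
pose b j := (1 - rho * h) * lam j.
pose X i j := rho * V i j - (1 - rho * h) * lam j * (V i (jbar j) - V i j).
have K0 : forall j, 0 < K j.
  move=> j; rewrite /K; apply: divr_gt0 => //; apply: mulr_gt0; rewrite subr_gt0 //.
have b0 : forall j, 0 <= b j.
  by move=> j; rewrite /b; apply: mulr_ge0; [rewrite subr_ge0 ltW | exact: lam0].
have key : forall i j, X i j <= X i.+1 j - K j * ((1 + r * h) * D) + K j * d i j.
  move=> i j.
  have := HF i j; rewrite /Fscheme /= => /supE E1.
  have := HF i.+1 j; rewrite /Fscheme /= => /supE E2.
  rewrite -lee_fin /X -E1.
  apply/ereal_supP => e [c [c0 hc] <-].
  set g := grid xl dx i in hc *.
  set p := g + h * (r * g + y j - c).
  have gS : grid xl dx i.+1 = g + dx by rewrite /g /grid natS'; ring.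
  have pS : grid xl dx i.+1 + h * (r * grid xl dx i.+1 + y j - c) = xl + ((p - xl) / dx + (1 + r * h)) * dx.
    by rewrite gS /p; field; rewrite gt_eqF.
  have pE : p = xl + ((p - xl) / dx) * dx by field; rewrite gt_eqF.
  have y10 : 0 <= (p - xl) / dx by apply: divr_ge0; [rewrite subr_ge0 | exact: ltW].
  have hc' : Cadm r xl h dx (y j) i.+1 c.
    split => //; rewrite pS.
    nra.
  have hDk : forall k, D <= V k.+1 j - V k j by move=> k; exact: hD.
  have Im := @interp_mono R xl dx D (V^~ j) ((p - xl) / dx) ((p - xl) / dx + (1 + r * h)) dx0 hDk.
  rewrite -pE -pS in Im.
  have := Im y10.
  have -> : (p - xl) / dx + (1 + r * h) - (p - xl) / dx = 1 + r * h by ring.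
  have hy : (p - xl) / dx <= (p - xl) / dx + (1 + r * h) by lra.
  move=> /(_ hy) {}Im.
  have le2 : (util gamma c + ((1 - rho * h) * (1 - lam j * h) / h *
      (interp xl dx (V^~ j) (grid xl dx i.+1 + h * (r * grid xl dx i.+1 + y j - c)) - V i.+1 j))%:E <=
      (rho * V i.+1 j - (1 - rho * h) * lam j * (V i.+1 (jbar j) - V i.+1 j))%:E)%E.
    by rewrite -E2; apply: ereal_sup_ubound; exists c.
  move: le2 Im.
  rewrite /K /d.
  set k := (1 - rho * h) * (1 - lam j * h) / h.
  have k0 : 0 <= k by exact: ltW (K0 j).
  set I2 := interp xl dx (V^~ j) (grid xl dx i.+1 + h * (r * grid xl dx i.+1 + y j - c)).
  set I1 := interp xl dx (V^~ j) p.
  rewrite /util; case: ifP => _; last by move=> _ _; rewrite addNye leNye.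
  rewrite -!EFinD !lee_fin => le2 Im.
  have := ler_wpM2l k0 Im.
  lra.
pose a j := rho + b j + K j.
pose cc j := b j + K j * (1 + r * h).
have ineq : forall i j, cc j * D <= a j * d i j.
  move=> i j; have := key i j; have := hD i (jbar j); rewrite /X /a /cc /b /d.
  have := b0 j; rewrite /b => b0' hd' k.
  have : (1 - rho * h) * lam j * (V i.+1 (jbar j) - V i (jbar j)) >= (1 - rho * h) * lam j * D.
    by apply: ler_wpM2l.
  lra.
have a0 : forall j, 0 < a j.
  move=> j; rewrite /a; have := K0 j; have := b0 j; lra.
have gap : forall j, 0 < a j - cc j.
  move=> j; rewrite /a /cc.
  have -> : rho + b j + K j - (b j + K j * (1 + r * h)) = rho - (K j * h) * r by ring.
  have -> : K j * h = (1 - rho * h) * (1 - lam j * h) by rewrite /K mulfVK // gt_eqF.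
  have p0 : 0 < (1 - rho * h) * (1 - lam j * h).
    by apply: mulr_gt0; rewrite subr_gt0 //.
  have p1 : (1 - rho * h) * (1 - lam j * h) <= 1.
    have hA : 0 < rho * h by apply: mulr_gt0.
    have hB : 0 <= lam j * h by apply: mulr_ge0 => //; exact: ltW.
    have := lamh j => hB1.
    have : (rho * h) * (lam j * h) <= rho * h by rewrite ler_piMr ?ltW.
    nra.
  have [r0|r0] := leP 0 r; nra.
pose g j := (a j - cc j) / a j.
have g0 : forall j, 0 < g j by move=> j; apply: divr_gt0.
pose m := Num.min (g ord0) (g ord_max).
have m0 : 0 < m by rewrite /m lt_min !g0.
have mg : forall j, m <= g j.
  move=> j; have : j = ord0 \/ j = ord_max.
    by case: j => [[|[|//]]] ? ; [left|right]; apply/val_inj.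
  by case=> ->; rewrite /m ge_min lexx ?orbT.
have D0 : 0 <= D.
  rewrite leNgt; apply/negP => Dn.
  have lb : lbound DS ((1 - m) * D).
    move=> x [i [j ->]].
    have := ineq i j; have := mg j; rewrite /g.
    move: (a0 j) (gap j) => aj gj.
    rewrite ler_pdivlMr // => mgj hij.
    have : (1 - m) * D * a j <= d i j * a j by nra.
    by rewrite ler_pM2r.
  have := lb_le_inf (ex_intro _ (d 0%N ord0) (ex_intro _ 0%N (ex_intro _ ord0 erefl))) lb.
  rewrite -/D; nra.
move=> j i; have := hD i j; rewrite /d; lra.
Qed.
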